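(* Let $w\in\mathfrak{S}_n$ and let $\varphi$ be a graph automorphism of $\Gamma(e,w)$ with $\varphi(w)=e$. (1) If $i<j<k$ and $w(i)>w(j)>w(k)$, then there exist $a<b<c$ with $w\ge t_{ac}$ such that $\varphi(\{wt_{ij},wt_{ik},wt_{jk}\})=\{t_{ab},t_{ac},t_{bc}\}$. (2) If $a<b<c$ and $w\ge t_{ac}$, then there exist $i<j<k$ with $w(i)>w(j)>w(k)$ such that $\varphi^{-1}(\{t_{ab},t_{ac},t_{bc}\})=\{wt_{ij},wt_{ik},wt_{jk}\}$.
   Context: $\mathfrak{S}_n$ is the symmetric group with simple generators $s_i=(i\ i{+}1)$; products are compositions $(uv)(m)=u(v(m))$. $t_{ij}$ denotes the transposition $(i\ j)$ for $i<j$; these are the reflections. $\le$ is Bruhat order and $e$ the identity. $\Gamma(e,w)$ is the simple undirected graph with vertex set $[e,w]=\{x:x\le w\}$ and edges $\{x,y\}$ whenever $y=xt$ for a transposition $t$. *)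

(* Defs.v *)
From mathcomp Require Import all_boot all_fingroup.
Set Implicit Arguments. Unset Strict Implicit. Unset Printing Implicit Defensive.

(* Permutations of {0,..,n-1} are elements of {perm 'I_n}.
   MathComp's product satisfies (s * t) x = t (s x); the paper's product
   (uv)(m) = u(v(m)) is therefore [pmul u v := v * u]. *)
Definition pmul n (u v : {perm 'I_n}) : {perm 'I_n} := (v * u)%g.

(* Coxeter length of a permutation = number of inversions *)
Definition inv_num n (x : {perm 'I_n}) : nat :=
  #|[set p : 'I_n * 'I_n | (p.1 < p.2) && (x p.2 < x p.1)]|.

Definition bruhat_step n (x y : {perm 'I_n}) : bool :=
  [exists i : 'I_n, exists j : 'I_n,
     [&& i < j, y == pmul x (tperm i j) & inv_num x < inv_num y]].

Definition bruhat n (x y : {perm 'I_n}) : bool := connect (@bruhat_step n) x y.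

Definition tadj n (x y : {perm 'I_n}) : bool :=
  [exists i : 'I_n, exists j : 'I_n, (i < j) && (y == pmul x (tperm i j))].

Definition binterval n (w : {perm 'I_n}) : {set {perm 'I_n}} :=
  [set x | bruhat x w].

Definition is_graph_aut n (w : {perm 'I_n}) (phi : {perm 'I_n} -> {perm 'I_n}) : Prop :=
  [/\ {in binterval w, forall x, phi x \in binterval w},
      {in binterval w &, injective phi} &
      {in binterval w &, forall x y, tadj (phi x) (phi y) = tadj x y}].

(* Main.v *)
Require Import Defs.
From mathcomp Require Import all_boot all_fingroup zify.
Set Implicit Arguments. Unset Strict Implicit. Unset Printing Implicit Defensive.


Lemma pmulE n (x t : {perm 'I_n}) m : pmul x t m = x (t m).
Proof. by rewrite /pmul permM. Qed.

Lemma inv_lt n (x : {perm 'I_n}) (i j : 'I_n) : i < j -> x j < x i ->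
  inv_num (pmul x (tperm i j)) < inv_num x.
Proof.
move=> ij xji; rewrite /inv_num.
set t := tperm i j.
set Iy := [set p : 'I_n * 'I_n | _].
set Ix := [set p : 'I_n * 'I_n | _].
pose f (p : 'I_n * 'I_n) := if t p.1 < t p.2 then (t p.1, t p.2) else p.
have tt' m : t (t m) = m by rewrite /t tpermK.
have finj : {in Iy &, injective f}.
  move=> [p1 p2] [q1 q2]; rewrite !inE /= !pmulE /f /= => /andP[pl _] /andP[ql _].
  case: ifP => h1; case: ifP => h2 //.
  - by case=> /perm_inj -> /perm_inj ->.
  - by case=> e1 e2; move: h2; rewrite -e1 -e2 !tt' pl.
  - by case=> e1 e2; move: h1; rewrite e1 e2 !tt' ql.
have fsub : f @: Iy \subset Ix :\ (i, j).
  apply/subsetP=> q /imsetP[[p1 p2]]; rewrite inE /= !pmulE => /andP[pl pinv] ->.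
  rewrite /f /=; case: ifP => h.
    rewrite !inE /= h pinv !andbT.
    apply/negP=> /eqP[e1 e2]; move: pl.
    by rewrite -(tt' p1) -(tt' p2) e1 e2 /t tpermL tpermR ltnNge (ltnW ij).
  rewrite !inE /= pl /=.
  have ne1 : ((p1, p2) == (i, j)) = false.
    apply/negP=> /eqP[e1 e2]; move: pinv; rewrite /t e1 e2 tpermL tpermR.
    by rewrite ltnNge (ltnW xji).
  rewrite ne1 /=.
  move: h pinv; rewrite /t.
  case: (tpermP i j p1) => [e1|e1|n1 n1']; case: (tpermP i j p2) => [e2|e2|n2 n2'];
    subst => //=; try lia.
rewrite -(card_in_imset finj).
apply: leq_ltn_trans (subset_leq_card fsub) _.
rewrite [X in _ < X](cardsD1 (i, j) Ix) inE /= ij xji /=.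
by [].
Qed.



Definition mv n (g : {perm 'I_n}) := [set m | g m != m].

Definition T3 n (a b c : 'I_n) := [set tperm a b; tperm a c; tperm b c].

Lemma mv_tperm n (a b : 'I_n) : a != b -> mv (tperm a b) = [set a; b].
Proof.
move=> ab; apply/setP=> m; rewrite !inE.
case: tpermP => [->|->|/eqP n1 /eqP n2]; rewrite ?eqxx ?orbT //.
all: try by rewrite eq_sym.
by rewrite (negbTE n1) (negbTE n2).
Qed.

Lemma tperm_pt n (c d m : 'I_n) : c != d -> tperm c d m != m -> tperm c d = tperm m (tperm c d m).
Proof.
move=> cd; case: tpermP => [->|->|]; rewrite ?eqxx //.
by rewrite tpermC.
Qed.

Lemma mvM n (a b c d : 'I_n) : a != b -> c != d -> tperm c d != tperm a b ->
  mv (tperm c d * tperm a b)%g = mv (tperm c d) :|: mv (tperm a b).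
Proof.
move=> ab cd ne; apply/setP=> m; rewrite !inE permM.
case e: (tperm c d m == m).
  by rewrite (eqP e).
rewrite /=; apply/negP=> /eqP h.
have h' : tperm c d m = tperm a b m by rewrite -{2}h tpermK.
have : tperm a b m != m by rewrite -h' e.
move/(tperm_pt ab); rewrite -h' -(tperm_pt cd) ?e // => E.
by rewrite E eqxx in ne.
Qed.

Lemma tperm_in2 n (a b x y : 'I_n) : x != y -> x \in [set a; b] -> y \in [set a; b] ->
  tperm x y = tperm a b.
Proof.
rewrite !inE => xy /orP[]/eqP ex /orP[]/eqP ey; subst.
all: try by rewrite eqxx in xy.
by []. exact: tpermC.
Qed.

Lemma tperm_in3 n (a b c x y : 'I_n) : x != y -> x \in [set a; b; c] -> y \in [set a; b; c] ->
  tperm x y \in T3 a b c.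
Proof.
rewrite /T3 !inE => xy /orP[/orP[/eqP ex|/eqP ex]|/eqP ex] /orP[/orP[/eqP ey|/eqP ey]|/eqP ey]; subst.
all: try by rewrite eqxx in xy.
all: try by rewrite eqxx ?orbT.
all: by rewrite tpermC eqxx ?orbT.
Qed.

Lemma T3_sort n (x y z : 'I_n) : x != y -> x != z -> y != z ->
  exists a b c : 'I_n, [/\ a < b, b < c & T3 x y z = T3 a b c].
Proof.
have S1 (p q r : 'I_n) : T3 p q r = T3 q p r.
  apply/setP=> g; rewrite /T3 !inE (tpermC q p).
  by case: (g == tperm p q); case: (g == tperm p r); case: (g == tperm q r).
have S2 (p q r : 'I_n) : T3 p q r = T3 p r q.
  apply/setP=> g; rewrite /T3 !inE (tpermC r q).
  by case: (g == tperm p q); case: (g == tperm p r); case: (g == tperm q r).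
move=> xy xz yz.
case: (ltngtP x y) => [h1|h1|/val_inj e]; last by rewrite e eqxx in xy.
- case: (ltngtP y z) => [h2|h2|/val_inj e]; last by rewrite e eqxx in yz.
  + by exists x, y, z.
  + case: (ltngtP x z) => [h3|h3|/val_inj e]; last by rewrite e eqxx in xz.
    * by exists x, z, y; rewrite S2.
    * by exists z, x, y; rewrite S2 S1 S2.
- case: (ltngtP x z) => [h2|h2|/val_inj e]; last by rewrite e eqxx in xz.
  + by exists y, x, z; rewrite S1.
  + case: (ltngtP y z) => [h3|h3|/val_inj e]; last by rewrite e eqxx in yz.
    * by exists y, z, x; rewrite S1 S2.
    * by exists z, y, x; rewrite S1 S2 S1.
Qed.


Lemma card3_le (T : finType) (p q r : T) : #|[set p; q; r]| <= 3.
Proof. rewrite setUC cardsU1 cards2; by case: (r \notin _); case: (p != q). Qed.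

Lemma card3_eq (T : finType) (p q r : T) : p != q -> p != r -> q != r -> #|[set p; q; r]| = 3.
Proof. move=> pq pr qr; rewrite setUC cardsU1 cards2 !inE negb_or pq !(eq_sym r) pr qr. by []. Qed.

Lemma mv_u n (u : {perm 'I_n}) (a b c d : 'I_n) : a != b -> c != d -> u != 1%g ->
  u = (tperm c d * tperm a b)%g -> mv u = [set c; d] :|: [set a; b].
Proof.
move=> ab cd u1 uE.
have ne : tperm c d != tperm a b.
  by apply/negP=> /eqP E; move: u1; rewrite uE E tperm2 eqxx.
by rewrite uE mvM // !mv_tperm.
Qed.

Lemma agree4 n (u : {perm 'I_n}) (a b c d : 'I_n) : a != b -> c != d -> u != 1%g ->
  u = (tperm c d * tperm a b)%g -> 4 <= #|mv u| -> forall m, m \in [set a; b] -> u m = tperm a b m.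
Proof.
move=> ab cd u1 uE h m mA.
have M := mv_u ab cd u1 uE.
move: h; rewrite M cardsU !cards2 ab cd => h.
set k := #|[set c; d] :&: [set a; b]| in h *. have : k == 0 by move: h; rewrite /=; lia.
rewrite cards_eq0 => /eqP I0.
have mC : m \notin [set c; d].
  apply/negP=> mC; have : m \in [set c; d] :&: [set a; b] by rewrite inE mC mA.
  by rewrite I0 inE.
rewrite uE permM; congr (tperm a b _).
move: mC; rewrite !inE negb_or => /andP[h1 h2]; apply: tpermD; by rewrite eq_sym.
Qed.

Lemma disj n (u : {perm 'I_n}) (a b a' b' : 'I_n) : a != b -> a' != b' -> tperm a b != tperm a' b' ->
  (forall m, m \in [set a; b] -> u m = tperm a b m) ->
  (forall m, m \in [set a'; b'] -> u m = tperm a' b' m) ->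
  [set a; b] :&: [set a'; b'] = set0.
Proof.
move=> ab ab' ne F F'; apply/setP=> m; rewrite inE [in RHS]inE.
apply/negP=> /andP[m1 m2].
have e : tperm a b m = tperm a' b' m by rewrite -F // -F'.
have h1 : tperm a b m != m by rewrite -(mv_tperm ab) in m1; rewrite inE in m1.
have h2 : tperm a' b' m != m by rewrite -(mv_tperm ab') in m2; rewrite inE in m2.
move: ne; rewrite (tperm_pt ab h1) (tperm_pt ab' h2) e eqxx. by [].
Qed.

Lemma tri n (s1 s2 s3 u : {perm 'I_n}) (a1 b1 a2 b2 a3 b3 c1 d1 c2 d2 c3 d3 : 'I_n) :
 a1 != b1 -> a2 != b2 -> a3 != b3 -> c1 != d1 -> c2 != d2 -> c3 != d3 ->
 s1 = tperm a1 b1 -> s2 = tperm a2 b2 -> s3 = tperm a3 b3 ->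
 s1 != s2 -> s1 != s3 -> s2 != s3 -> u != 1%g ->
 u = (tperm c1 d1 * s1)%g -> u = (tperm c2 d2 * s2)%g -> u = (tperm c3 d3 * s3)%g ->
 exists a b c : 'I_n, [/\ a < b, b < c & [set s1; s2; s3] = T3 a b c].
Proof.
move=> ab1 ab2 ab3 cd1 cd2 cd3 E1 E2 E3 n12 n13 n23 u1 U1 U2 U3.
rewrite E1 in U1 n12 n13; rewrite E2 in U2 n12 n23; rewrite E3 in U3 n13 n23.
have M1 := mv_u ab1 cd1 u1 U1.
have M2 := mv_u ab2 cd2 u1 U2.
have M3 := mv_u ab3 cd3 u1 U3.
have S1 : [set a1; b1] \subset mv u by rewrite M1 subsetUr.
have S2 : [set a2; b2] \subset mv u by rewrite M2 subsetUr.
have S3 : [set a3; b3] \subset mv u by rewrite M3 subsetUr.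
have c4 : #|mv u| <= 4.
  by rewrite M1 cardsU !cards2 ab1 cd1; apply: leq_subr.
case: (ltnP #|mv u| 4) => h; last first.
  have F1 := agree4 ab1 cd1 u1 U1 h.
  have F2 := agree4 ab2 cd2 u1 U2 h.
  have F3 := agree4 ab3 cd3 u1 U3 h.
  have D12 := disj ab1 ab2 n12 F1 F2.
  have D13 := disj ab1 ab3 n13 F1 F3.
  have D23 := disj ab2 ab3 n23 F2 F3.
  have : #|[set a1; b1] :|: [set a2; b2] :|: [set a3; b3]| <= 4.
    apply: leq_trans c4; apply: subset_leq_card.
    by rewrite subUset S3 andbT subUset S1 S2.
  rewrite cardsU setIUl D13 D23 setU0 cards0 cardsU D12 cards0 !cards2 ab1 ab2 ab3.
  by [].
have [z zA2 zA1] : exists2 z, z \in [set a2; b2] & z \notin [set a1; b1].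
  apply/subsetPn; apply/negP=> /subsetP H.
  move: n12; rewrite (tperm_in2 ab2 (H _ _) (H _ _)) ?eqxx //; by rewrite !inE eqxx ?orbT.
have zS : z \in mv u by apply: (subsetP S2).
have B3 : [set a1; b1; z] = mv u.
  apply/eqP; rewrite eqEcard; apply/andP; split.
    by rewrite !subUset !sub1set zS andbT; rewrite -!sub1set -subUset.
  move: zA1; rewrite !inE negb_or => /andP[za zb].
  by rewrite card3_eq // 1?eq_sym.
have IN (a b : 'I_n) : a != b -> [set a; b] \subset mv u -> tperm a b \in T3 a1 b1 z.
  move=> ab /subsetP H; apply: tperm_in3 => //; rewrite B3; apply: H; by rewrite !inE eqxx ?orbT.
move: zA1; rewrite !inE negb_or => /andP[za zb].
have az : a1 != z by rewrite eq_sym.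
have bz : b1 != z by rewrite eq_sym.
have [a [b [c [lab lbc TE]]]] := T3_sort ab1 az bz.
exists a, b, c; split => //; rewrite -TE E1 E2 E3.
apply/eqP; rewrite eqEcard (card3_eq n12 n13 n23) (card3_le (tperm a1 b1) (tperm a1 z) (tperm b1 z) : #|T3 a1 b1 z| <= 3) andbT.
by rewrite !subUset !sub1set (IN _ _ ab1 S1) (IN _ _ ab2 S2) (IN _ _ ab3 S3).
Qed.


Lemma step n (x : {perm 'I_n}) (i j : 'I_n) : i < j -> x j < x i ->
  bruhat (pmul x (tperm i j)) x.
Proof.
move=> ij xji; apply: connect1; apply/existsP; exists i; apply/existsP; exists j.
rewrite ij inv_lt // andbT; apply/eqP.
by rewrite /pmul mulgA tperm2 mul1g.
Qed.

Lemma bruhat_inv n (x y : {perm 'I_n}) : bruhat x y -> inv_num x <= inv_num y.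
Proof.
move/connectP=> [p]; elim: p x => [|z p IH] x /=; first by move=> _ ->.
move=> /andP[st pa] ey; have := IH z pa ey; apply: leq_trans.
move: st => /existsP[i /existsP[j /and3P[_ _ h]]]; exact: ltnW.
Qed.

Lemma inv_back n (w : {perm 'I_n}) (i j : 'I_n) : i < j ->
  bruhat (pmul w (tperm i j)) w -> w j < w i.
Proof.
move=> ij /bruhat_inv le.
case: (ltngtP (w j) (w i)) => // h.
  have := @inv_lt n (pmul w (tperm i j)) i j ij.
  rewrite !pmulE tpermL tpermR => /(_ h).
  by rewrite /pmul mulgA tperm2 mul1g ltnNge le.
have E : j = i by apply: (@perm_inj _ w); apply: val_inj.
by move: ij; rewrite E ltnn.
Qed.

Lemma tadjR n (x y g : {perm 'I_n}) : tadj (x * g)%g (y * g)%g = tadj x y.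
Proof.
apply/existsP/existsP=> [][i /existsP[j /andP[ij /eqP E]]]; exists i; apply/existsP; exists j;
  rewrite ij /= /pmul.
  by apply/eqP; apply: (mulIg g); rewrite E /pmul mulgA.
by rewrite E /pmul mulgA.
Qed.

Lemma tadjI n (x : {perm 'I_n}) (p q : 'I_n) : p < q -> tadj x (tperm p q * x)%g.
Proof. move=> pq; apply/existsP; exists p; apply/existsP; exists q; by rewrite pq eqxx. Qed.

Lemma tadjE n (x y : {perm 'I_n}) : tadj x y -> exists p q : 'I_n, p < q /\ y = (tperm p q * x)%g.
Proof. by move=> /existsP[p /existsP[q /andP[pq /eqP E]]]; exists p, q. Qed.

Lemma ltn_neq n (p q : 'I_n) : p < q -> p != q.
Proof. by move=> h; apply/negP=> /eqP E; rewrite E ltnn in h. Qed.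

Lemma comm1 n (a b c : 'I_n) : a != b -> a != c -> b != c ->
  (tperm b c * tperm a b = tperm a b * tperm a c)%g.
Proof. by move=> ab ac bc; rewrite conjgC tpermJ tpermR tpermD // eq_sym. Qed.

Lemma comm2 n (a b c : 'I_n) : a != b -> a != c -> b != c ->
  (tperm a b * tperm a c = tperm a c * tperm b c)%g.
Proof. by move=> ab ac bc; rewrite conjgC tpermJ tpermL (tpermD ab) 1?(tpermC c b) // eq_sym. Qed.

Lemma tperm_ne n (a b c d z : 'I_n) : tperm a b z != tperm c d z -> tperm a b != tperm c d.
Proof. by apply: contra => /eqP ->. Qed.

Lemma surj (T : finType) (A : {set T}) (f : T -> T) :
  {in A, forall x, f x \in A} -> {in A &, injective f} ->
  forall y, y \in A -> exists2 x, x \in A & f x = y.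
Proof.
move=> fA finj y yA.
have E : f @: A = A.
  apply/eqP; rewrite eqEcard card_in_imset // leqnn andbT.
  by apply/subsetP=> z /imsetP[x xA ->]; apply: fA.
by move: yA; rewrite -{1}E => /imsetP[x xA ->]; exists x.
Qed.


Unset Implicit Arguments.
Theorem lemma4p2 (n : nat) (w : {perm 'I_n}) (phi : {perm 'I_n} -> {perm 'I_n}) :
  is_graph_aut w phi -> phi w = 1%g ->
  (forall i j k : 'I_n, i < j -> j < k -> w j < w i -> w k < w j ->
     exists a b c : 'I_n, [/\ a < b, b < c, bruhat (tperm a c) w &
       phi @: [set pmul w (tperm i j); pmul w (tperm i k); pmul w (tperm j k)]
       = [set tperm a b; tperm a c; tperm b c]]) /\
  (forall a b c : 'I_n, a < b -> b < c -> bruhat (tperm a c) w ->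
     exists i j k : 'I_n, [/\ i < j, j < k, w j < w i, w k < w j &
       [set x in binterval w | phi x \in [set tperm a b; tperm a c; tperm b c]]
       = [set pmul w (tperm i j); pmul w (tperm i k); pmul w (tperm j k)]]).
Proof.
move=> [Hmap Hinj Hadj] phiw.
have inI x : (x \in binterval w) = bruhat x w by rewrite inE.
have wI : w \in binterval w by rewrite inI; apply: connect0.
have adj1 x : x \in binterval w -> tadj w x -> exists p q : 'I_n, p < q /\ phi x = tperm p q.
  move=> xI h; have := Hadj _ _ wI xI; rewrite h phiw => /tadjE[p [q [pq E]]].
  by exists p, q; rewrite E mulg1.
split.
- move=> i j k ij jk wji wkj.
  have ik : i < k by apply: ltn_trans jk.
  have wki : w k < w i by apply: ltn_trans wji.
  have nij := ltn_neq ij; have nik := ltn_neq ik; have njk := ltn_neq jk.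
  set x1 := pmul w (tperm i j); set x2 := pmul w (tperm i k); set x3 := pmul w (tperm j k).
  set v := pmul x1 (tperm j k).
  have x1I : x1 \in binterval w by rewrite inI; apply: step.
  have x2I : x2 \in binterval w by rewrite inI; apply: step.
  have x3I : x3 \in binterval w by rewrite inI; apply: step.
  have vI : v \in binterval w.
    rewrite inI; apply: connect_trans (_ : bruhat x1 w); last by rewrite -inI.
    by apply: step => //; rewrite /x1 !pmulE tpermR tpermD // eq_sym.
  have [p1 [q1 [pq1 P1]]] := adj1 _ x1I (tadjI _ ij).
  have [p2 [q2 [pq2 P2]]] := adj1 _ x2I (tadjI _ ik).
  have [p3 [q3 [pq3 P3]]] := adj1 _ x3I (tadjI _ jk).
  have t12 : tperm i j != tperm i k by apply: (@tperm_ne _ _ _ _ _ j); rewrite tpermR tpermD // eq_sym.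
  have t13 : tperm i j != tperm j k by apply: (@tperm_ne _ _ _ _ _ i); rewrite tpermL tpermD // eq_sym.
  have t23 : tperm i k != tperm j k by apply: (@tperm_ne _ _ _ _ _ i); rewrite tpermL tpermD // eq_sym.
  have dphi x y : x \in binterval w -> y \in binterval w -> x != y -> phi x != phi y.
    by move=> xI yI; apply: contra => /eqP /(Hinj _ _ xI yI) ->.
  have xne (s t : {perm 'I_n}) : s != t -> pmul w s != pmul w t.
    by apply: contra => /eqP /mulIg ->.
  have n12 := dphi _ _ x1I x2I (xne _ _ t12).
  have n13 := dphi _ _ x1I x3I (xne _ _ t13).
  have n23 := dphi _ _ x2I x3I (xne _ _ t23).
  have vw : v != w.
    apply/negP=> /eqP E.
    have h : (tperm j k * tperm i j = 1)%g.
      by apply: (mulIg w); rewrite mul1g -mulgA; exact: E.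
    have : tperm j k = tperm i j by rewrite -[tperm j k]mulg1 -(tperm2 i j) mulgA h mul1g.
    by move=> E'; move: t13; rewrite E' eqxx.
  have u1 : phi v != 1%g by rewrite -phiw; apply: dphi.
  have vadj x : x \in binterval w -> tadj x v -> exists c d : 'I_n, c < d /\ phi v = (tperm c d * phi x)%g.
    move=> xI h; have := Hadj _ _ xI vI; rewrite h => /tadjE[c [d [cd E]]]; by exists c, d.
  have [c1 [d1 [cd1 V1]]] := vadj _ x1I (tadjI _ jk).
  have [c2 [d2 [cd2 V2]]] : exists c d : 'I_n, c < d /\ phi v = (tperm c d * phi x2)%g.
    apply: vadj => //; have -> : v = (tperm i j * x2)%g.
      by rewrite /v /x1 /x2 /pmul !mulgA comm1.
    exact: tadjI.
  have [c3 [d3 [cd3 V3]]] : exists c d : 'I_n, c < d /\ phi v = (tperm c d * phi x3)%g.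
    apply: vadj => //; have -> : v = (tperm i k * x3)%g.
      by rewrite /v /x1 /x3 /pmul !mulgA comm1 // comm2.
    exact: tadjI.
  have [a [b [c [lab lbc TE]]]] := tri (ltn_neq pq1) (ltn_neq pq2) (ltn_neq pq3)
     (ltn_neq cd1) (ltn_neq cd2) (ltn_neq cd3) P1 P2 P3 n12 n13 n23 u1 V1 V2 V3.
  exists a, b, c; split => //.
    have : tperm a c \in T3 a b c by rewrite /T3 !inE eqxx ?orbT.
    rewrite -TE !inE -!inI => /orP[/orP[]|] /eqP ->; exact: Hmap.
  by rewrite !imsetU !imset_set1.
- move=> a b c ab bc acw.
  have ac : a < c by apply: ltn_trans bc.
  have nab := ltn_neq ab; have nac := ltn_neq ac; have nbc := ltn_neq bc.
  set t1 := tperm a b; set t2 := tperm a c; set t3 := tperm b c.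
  set u0 := (t1 * t2)%g.
  have t2I : t2 \in binterval w by rewrite inI.
  have u0I : u0 \in binterval w.
    rewrite inI; apply: connect_trans acw.
    by apply: (@step _ t2 a b) => //; rewrite tpermL tpermD // eq_sym.
  have u0a : u0 a = b by rewrite permM /t1 /t2 tpermL tpermD // eq_sym.
  have u0b : u0 b = c by rewrite permM /t1 /t2 tpermR tpermL.
  have u0c : u0 c = a by rewrite permM /t1 /t2 (tpermD nac nbc) tpermR.
  have U1 : u0 = (t3 * t1)%g by rewrite /u0 /t1 /t2 /t3 comm1.
  have U2 : u0 = (t1 * t2)%g by [].
  have U3 : u0 = (t2 * t3)%g by rewrite /u0 /t1 /t2 /t3 comm2.
  have t1I : t1 \in binterval w.
    rewrite inI; apply: connect_trans (_ : bruhat u0 w); last by rewrite -inI.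
    have -> : t1 = pmul u0 (tperm b c) by rewrite /pmul U1 mulgA tperm2 mul1g.
    by apply: step => //; rewrite u0c u0b.
  have t3I : t3 \in binterval w.
    rewrite inI; apply: connect_trans (_ : bruhat u0 w); last by rewrite -inI.
    have -> : t3 = pmul u0 (tperm a c) by rewrite /pmul U3 mulgA tperm2 mul1g.
    by apply: step => //; rewrite u0c u0a.
  have t12 : t1 != t2 by apply: (@tperm_ne _ _ _ _ _ b); rewrite tpermR tpermD // eq_sym.
  have t13 : t1 != t3 by apply: (@tperm_ne _ _ _ _ _ a); rewrite tpermL tpermD // eq_sym.
  have t23 : t2 != t3 by apply: (@tperm_ne _ _ _ _ _ a); rewrite tpermL tpermD // eq_sym.
  have [x1 x1I X1] := surj Hmap Hinj t1I.
  have [x2 x2I X2] := surj Hmap Hinj t2I.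
  have [x3 x3I X3] := surj Hmap Hinj t3I.
  have [v vI V] := surj Hmap Hinj u0I.
  have wadj x (p q : 'I_n) : x \in binterval w -> p < q -> phi x = tperm p q ->
      exists r s : 'I_n, r < s /\ x = (tperm r s * w)%g.
    move=> xI pq E; apply: tadjE; rewrite -(Hadj _ _ wI xI) phiw E -[X in tadj _ X]mulg1.
    exact: tadjI.
  have [p1 [q1 [pq1 R1]]] := wadj _ _ _ x1I ab X1.
  have [p2 [q2 [pq2 R2]]] := wadj _ _ _ x2I ac X2.
  have [p3 [q3 [pq3 R3]]] := wadj _ _ _ x3I bc X3.
  have vadj x (t : {perm 'I_n}) (p q : 'I_n) : x \in binterval w -> p < q -> phi x = t ->
      u0 = (tperm p q * t)%g -> exists e f : 'I_n, e < f /\ v = (tperm e f * x)%g.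
    move=> xI pq E UE; apply: tadjE; rewrite -(Hadj _ _ xI vI) V E UE.
    exact: tadjI.
  have [c1 [d1 [cd1 V1]]] := vadj _ _ _ _ x1I bc X1 U1.
  have [c2 [d2 [cd2 V2]]] := vadj _ _ _ _ x2I ab X2 U2.
  have [c3 [d3 [cd3 V3]]] := vadj _ _ _ _ x3I ac X3 U3.
  set v' := (v * w^-1)%g.
  have vE x (r : {perm 'I_n}) (e f : 'I_n) : x = (r * w)%g -> v = (tperm e f * x)%g -> v' = (tperm e f * r)%g.
    by move=> E1 E2; rewrite /v' E2 E1 mulgA mulgK.
  have u0n : u0 != 1%g.
    apply/negP=> /eqP h; move: t12.
    have -> : t1 = t2 by rewrite -[t1]mulg1 -(tperm2 a c) mulgA -/t2 -/u0 h mul1g.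
    by rewrite eqxx.
  have v1 : v' != 1%g.
    apply/negP=> /eqP h; move: u0n; rewrite -V -phiw.
    have -> : v = w by rewrite -[v](mulgKV w) -/v' h mul1g.
    by rewrite eqxx.
  have rne (x y r s : {perm 'I_n}) (t t' : {perm 'I_n}) : x = (r * w)%g -> y = (s * w)%g ->
      phi x = t -> phi y = t' -> t != t' -> r != s.
    by move=> -> -> E E'; apply: contra => /eqP rs; rewrite -E -E' rs.
  have [i [j [k [ij jk TE]]]] := tri (ltn_neq pq1) (ltn_neq pq2) (ltn_neq pq3)
     (ltn_neq cd1) (ltn_neq cd2) (ltn_neq cd3) (erefl _) (erefl _) (erefl _)
     (rne _ _ _ _ _ _ R1 R2 X1 X2 t12) (rne _ _ _ _ _ _ R1 R3 X1 X3 t13)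
     (rne _ _ _ _ _ _ R2 R3 X2 X3 t23) v1 (vE _ _ _ _ R1 V1) (vE _ _ _ _ R2 V2) (vE _ _ _ _ R3 V3).
  have XE : [set x1; x2; x3] = [set pmul w (tperm i j); pmul w (tperm i k); pmul w (tperm j k)].
    have -> : [set x1; x2; x3] = (fun r => r * w)%g @: [set tperm p1 q1; tperm p2 q2; tperm p3 q3].
      by rewrite !imsetU !imset_set1 R1 R2 R3.
    by rewrite TE /T3 !imsetU !imset_set1.
  have XI : [set x1; x2; x3] \subset binterval w.
    by rewrite !subUset !sub1set x1I x2I x3I.
  have inX (p q : 'I_n) : p < q -> tperm p q \in T3 i j k -> w q < w p.
    move=> pq h; apply: inv_back => //; rewrite -inI; apply: (subsetP XI).
    rewrite XE; rewrite /T3 !inE in h.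
    by rewrite !inE; case/orP: h => [/orP[]|] /eqP ->; rewrite eqxx ?orbT.
  exists i, j, k; split => //.
  + by apply: inX => //; rewrite /T3 !inE eqxx.
  + by apply: inX => //; rewrite /T3 !inE eqxx ?orbT.
  rewrite -XE; apply/setP=> x; rewrite [in LHS]inE.
  apply/idP/idP.
    move=> /andP[xI]; rewrite !inE => /orP[/orP[]|] /eqP h.
    * by rewrite (Hinj _ _ xI x1I (etrans h (esym X1))) eqxx.
    * by rewrite (Hinj _ _ xI x2I (etrans h (esym X2))) eqxx ?orbT.
    * by rewrite (Hinj _ _ xI x3I (etrans h (esym X3))) eqxx ?orbT.
  rewrite !inE => /orP[/orP[]|] /eqP ->.
  * by rewrite -inI x1I X1 eqxx.
  * by rewrite -inI x2I X2 eqxx ?orbT.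
  * by rewrite -inI x3I X3 eqxx ?orbT.
Qed.
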